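(* Let $G=(U,V,E)$ be a bipartite graph and let $X \subseteq V$ be such that some minimum-cardinality vertex cover of $G$ contains $X$. Let $Y \subseteq V$. Then $G \setminus Y$ has a minimum-cardinality vertex cover containing $X \setminus Y$.
   Context: $G=(U,V,E)$ denotes a bipartite graph with vertex set $U\cup V$ and every edge having one end in $U$ and the other in $V$. $G\setminus Y$ denotes the graph obtained by deleting the vertices of $Y$. A vertex cover is a set of vertices incident to all edges. *)

(* Defs.v *)
From mathcomp Require Import all_boot.
Set Implicit Arguments. Unset Strict Implicit. Unset Printing Implicit Defensive.

(* A bipartite graph G = (U, V, E) is given by two finite vertex types U, V
   (the two sides, disjoint by construction) and an edge relation E : U -> V -> bool.
   We consider the induced subgraph on U ∪ W for W : {set V}
   (so G \ Y, for Y ⊆ V, is the case W = ~: Y). *)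

Definition is_vcover (U V : finType) (E : U -> V -> bool) (W : {set V})
  (A : {set U}) (B : {set V}) : Prop :=
  B \subset W /\ (forall u v, v \in W -> E u v -> (u \in A) || (v \in B)).

Definition is_min_vcover (U V : finType) (E : U -> V -> bool) (W : {set V})
  (A : {set U}) (B : {set V}) : Prop :=
  is_vcover E W A B /\
  (forall A' B', is_vcover E W A' B' -> #|A| + #|B| <= #|A'| + #|B'|).

(* Main.v *)
Require Import Defs.
From mathcomp Require Import all_boot.
From mathcomp Require Import zify.
Set Implicit Arguments. Unset Strict Implicit.

Definition cb (U V : finType) (E : U -> V -> bool) (W : {set V})
  (p : {set U} * {set V}) : bool :=
  (p.2 \subset W) && [forall u, forall v, ((v \in W) && E u v) ==> (u \in p.1) || (v \in p.2)].

Lemma cbP (U V : finType) (E : U -> V -> bool) W A B :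
  reflect (is_vcover E W A B) (cb E W (A, B)).
Proof.
apply: (iffP andP) => [[H1 /forallP H2]|[H1 H2]]; split => //.
- move=> u v Hv He; move/forallP: (H2 u) => /(_ v) /implyP; apply; by rewrite Hv He.
- apply/forallP => u; apply/forallP => v; apply/implyP => /andP [Hv He]; exact: H2.
Qed.

Lemma exists_min (U V : finType) (E : U -> V -> bool) (W : {set V}) :
  exists A B, is_min_vcover E W A B.
Proof.
have H0 : cb E W (setT, set0).
  apply/cbP; split; first by rewrite sub0set.
  by move=> u v _ _; rewrite in_setT.
case: (arg_minnP (fun p : {set U} * {set V} => #|p.1| + #|p.2|) H0) => [[A B]] /cbP Hc Hm.
exists A, B; split => // A' B' /cbP Hc'; exact: (Hm (A', B') Hc').
Qed.

Theorem lemma5 (U V : finType) (E : U -> V -> bool) (X Y : {set V}) :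
  (exists (A : {set U}) (B : {set V}), is_min_vcover E setT A B /\ X \subset B) ->
  exists (A : {set U}) (B : {set V}),
    is_min_vcover E (~: Y) A B /\ (X :\: Y) \subset B.
Proof.
move=> [A [B [[[_ HcAB] HmAB] HXB]]].
have [A' [B' [[HB'Y HcA'] HmA']]] := exists_min E (~: Y).
set A1 := A :&: A'. set B1 := (B :\: Y) :|: B'.
set A2 := A :|: A'. set B2 := ((B :\: Y) :&: B') :|: (B :&: Y).
have HB'n : forall v, v \in B' -> v \notin Y.
  by move=> v /(subsetP HB'Y); rewrite inE.
have C1 : is_vcover E (~: Y) A1 B1.
  split.
    apply/subsetP => v; rewrite !inE => /orP [/andP [Hy _]|Hb]; first by []. by rewrite (HB'n v Hb).
  move=> u v Hv He; have := HcAB u v (in_setT _) He; have := HcA' u v Hv He.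
  rewrite inE in Hv; by rewrite !inE Hv; case: (u \in A); case: (u \in A'); case: (v \in B); case: (v \in B').
have C2 : is_vcover E setT A2 B2.
  split; first exact: subsetT.
  move=> u v _ He; rewrite !inE.
  have := HcAB u v (in_setT _) He.
  case Hy: (v \in Y) => /=.
    by case: (u \in A); case: (u \in A'); case: (v \in B).
  have Hv : v \in ~: Y by rewrite inE Hy.
  have := HcA' u v Hv He.
  by case: (u \in A); case: (u \in A'); case: (v \in B); case: (v \in B'); rewrite ?andbF.
have Hdisj : ((B :\: Y) :&: B') :&: (B :&: Y) = set0.
  apply/setP => v; rewrite !inE.
  by case: (v \in Y); rewrite ?andbF ?andbT //= !andbF.
have e1 := cardsUI A A'.
have e2 := cardsUI (B :\: Y) B'.
have e3 := cardsUI ((B :\: Y) :&: B') (B :&: Y).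
rewrite Hdisj cards0 in e3.
have e4 := cardsID Y B.
have h2 := HmAB A2 B2 C2.
have h1 := HmA' A1 B1 C1.
exists A1, B1; split.
  split => // A'' B'' Hc''.
  have := HmA' A'' B'' Hc''.
  rewrite /A1 /B1 /A2 /B2 in h1 h2 *. lia.
apply/subsetP => v; rewrite !inE => /andP [Hy Hx].
by rewrite Hy (subsetP HXB _ Hx).
Qed.
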